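(* Let $r$ be a prime divisor of $n$ and let $S\subseteq\mathbb{Z}_n$. Assume there is $m\mid n$ with $\gcd(m,r)=1$ such that $\Phi_{mr}\mid m_S$ but $\Phi_m\nmid m_S$. Then $|S|\ge r$. Moreover, every coset of the subgroup of $\mathbb{Z}_n$ of order $n/r$ contains at least one point of $S$.
   Context: $\Phi_d$ denotes the $d$-th cyclotomic polynomial; $m_S(x)=\sum_{s\in S}x^s$ is the mask polynomial of $S$, where elements of $\mathbb{Z}_n$ are identified with $\{0,\dots,n-1\}$ and the polynomial is considered modulo $x^n-1$. *)

(* Defs.v *)
From mathcomp Require Import all_boot all_order all_algebra all_field.
Set Implicit Arguments. Unset Strict Implicit. Unset Printing Implicit Defensive.
Import GRing.Theory.
Local Open Scope ring_scope.

(* Mask polynomial of S ⊆ Z_n (elements of Z_n identified with 0..n-1,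
   i.e. with the ordinals 'I_n): m_S(x) = sum_{s in S} x^s, with integer
   coefficients. *)
Definition mask_poly (n : nat) (S : {set 'I_n}) : {poly int} :=
  \sum_(s in S) 'X^(nat_of_ord s).

Definition pdvdQ (p q : {poly int}) : bool :=
  (map_poly (intr : int -> rat) p %| map_poly (intr : int -> rat) q)%R.

(* Main.v *)
Require Import Defs.
From mathcomp Require Import all_boot all_order all_algebra all_field.
From mathcomp Require Import ring.
Import GRing.Theory.
Local Open Scope ring_scope.

Local Notation pZtoC := (map_poly (intr : int -> algC)).

Lemma pZtoQtoC (p : {poly int}) :
  map_poly (ratr : rat -> algC) (map_poly (intr : int -> rat) p) = pZtoC p.
Proof.
by rewrite -map_poly_comp; apply: eq_map_poly => b; rewrite /= rmorph_int.
Qed.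

Lemma horner_mask n (S : {set 'I_n}) (x : algC) :
  (pZtoC (mask_poly S)).[x] = (\sum_(s in S) x ^+ s)%R.
Proof.
rewrite /mask_poly rmorph_sum horner_sum; apply: eq_bigr => s _.
by rewrite /= map_polyXn hornerXn.
Qed.

Lemma pdvdQ_root p q (x : algC) :
  pdvdQ p q -> root (pZtoC p) x -> root (pZtoC q) x.
Proof.
rewrite /pdvdQ -(dvdp_map (ratr : {rmorphism rat -> algC})) !pZtoQtoC.
exact: root_dvdp.
Qed.

Lemma root_pdvdQ m q (y : algC) :
  m.-primitive_root y -> root (pZtoC q) y -> pdvdQ ('Phi_m) q.
Proof.
move=> prim_y; have [p [Dp _] dvp] := minCpolyP y.
rewrite -pZtoQtoC dvp /pdvdQ.
have -> : map_poly intr 'Phi_m = p; last by [].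
apply: (@map_inj_poly _ _ (ratr : rat -> algC)); [exact: fmorph_inj | by rewrite rmorph0 |].
by rewrite pZtoQtoC -Dp (minCpoly_cyclotomic prim_y) (Cintr_Cyclotomic prim_y).
Qed.

Lemma geom_zero (w : algC) r e :
  r.-primitive_root w -> ~~ (r %| e)%N -> (\sum_(q < r) (w ^+ e) ^+ q = 0)%R.
Proof.
move=> pw nd; have : ((w ^+ e) ^+ r - 1 = 0)%R.
  by rewrite exprAC (prim_expr_order pw) expr1n subrr.
rewrite subrX1 => /eqP; rewrite mulf_eq0 => /orP[|/eqP //].
by rewrite subr_eq0 -(prim_order_dvd pw) (negbTE nd).
Qed.

Theorem lemma3p3 (n r : nat) (S : {set 'I_n}) :
  (0 < n)%N -> prime r -> (r %| n)%N ->
  (exists m : nat, [/\ (m %| n)%N, coprime m r,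
      pdvdQ ('Phi_(m * r)) (mask_poly S) & ~~ pdvdQ ('Phi_m) (mask_poly S)]) ->
  (r <= #|S|)%N /\
  (forall a : 'I_n, exists2 s : 'I_n, s \in S & (s = a %[mod r])%N).
Proof.
move=> n_gt0 pr_r r_dv_n [m [m_dv_n co_mr dvN ndvm]].
have r_gt0 : (0 < r)%N := prime_gt0 pr_r.
have m_gt0 : (0 < m)%N := dvdn_gt0 n_gt0 m_dv_n.
have N_gt0 : (0 < m * r)%N by rewrite muln_gt0 m_gt0.
have [z prim_z] := C_prim_root_exists N_gt0.
pose E (x : algC) := (\sum_(s in S) x ^+ s)%R.
have Ecop k : coprime k (m * r) -> E (z ^+ k) = 0%R.
  move=> cok; apply/eqP; rewrite /E -horner_mask.
  have := @pdvdQ_root _ _ (z ^+ k) dvN; rewrite /root; apply.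
  by rewrite -/(root _ _) (Cintr_Cyclotomic prim_z) (root_cyclotomic prim_z) prim_root_exp_coprime.
have Er : E (z ^+ r) != 0%R.
  apply: contra ndvm => /eqP E0; apply: (@root_pdvdQ _ _ (z ^+ r)).
    by have := dvdn_prim_root prim_z (dvdn_mulr r (dvdnn m)); rewrite mulKn.
  by rewrite /root horner_mask; apply/eqP.
have pw : r.-primitive_root (z ^+ m).
  by have := dvdn_prim_root prim_z (dvdn_mull m (dvdnn r)); rewrite mulnK.
have main (a : 'I_n) : exists2 s : 'I_n, s \in S & (s = a %[mod r])%N.
  case: (pickP (fun s : 'I_n => (s \in S) && (s %% r == a %% r)%N)).
    by move=> s /andP[sS /eqP e]; exists s.
  move=> none; exfalso; apply: (negP Er).
  set j := (a %% r)%N.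
  have j_lt : (j < r)%N by rewrite ltn_mod.
  pose T := (\sum_(q < r) (z ^+ m) ^+ (q * (r - j)) * E (z ^+ (r + m * q)))%R.
  have T1 : T = (\sum_(s in S) z ^+ (r * s) * \sum_(q < r) ((z ^+ m) ^+ (s + (r - j))) ^+ q)%R.
    rewrite /T /E; under eq_bigr => q _ do rewrite mulr_sumr.
    rewrite exchange_big /=; apply: eq_bigr => s _; rewrite mulr_sumr.
    apply: eq_bigr => q _; rewrite -!exprM -!exprD; congr (_ ^+ _).
    move: (r - j)%N => t; ring.
  have T2 : T = E (z ^+ r).
    rewrite /T (bigD1 (Ordinal r_gt0)) //= big1 ?addr0.
      by rewrite mul0n expr0 mul1r muln0 addn0.
    move=> q; rewrite -val_eqE /= => q0; rewrite Ecop ?mulr0 //.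
    have qlt := ltn_ord q; set qq := nat_of_ord q in q0 qlt *.
    rewrite coprimeMr; apply/andP; split.
      by rewrite coprime_sym /coprime addnC mulnC gcdnMDl.
    rewrite coprime_sym /coprime gcdnDl -/(coprime r (m * qq)) coprimeMr.
    rewrite coprime_sym co_mr prime_coprime //=.
    by rewrite gtnNdvd // lt0n.
  rewrite -T2 T1 big1 // => s sS; rewrite geom_zero ?mulr0 //.
  have ns : (s %% r != j)%N by move: (none s); rewrite sS => /negbT.
  apply/negP => dv; move/negP: ns; apply.
  rewrite addnBA ?(ltnW j_lt) // -eqn_mod_dvd in dv; last first.
    by apply: leq_trans (ltnW j_lt) (leq_addl _ _).
  by rewrite modnDr (modn_small j_lt) in dv.
split=> //.
have rn : (r <= n)%N := dvdn_leq n_gt0 r_dv_n.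
pose f (s : 'I_n) : 'I_r := Ordinal (ltn_pmod s r_gt0).
apply: leq_trans (leq_imset_card f S).
rewrite -[X in (X <= _)%N]card_ord; apply: subset_leq_card; apply/subsetP => j _.
have jn : (j < n)%N := leq_trans (ltn_ord j) rn.
have [s sS e] := main (Ordinal jn).
apply/imsetP; exists s => //; apply: val_inj => /=.
by rewrite e /= modn_small.
Qed.
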